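(* Let $\varepsilon\in(0,1)$. Given a parameter $C\le\frac{1}{4\varepsilon}$ for the number of coordinates with frequency more than $1$, and a stream whose number of distinct elements is at least $\Omega\left(\frac{1}{\varepsilon^2}\right)$, there exists a one-pass streaming algorithm that uses $O\left(\frac{C}{\varepsilon}\log n\right)$ bits of space and outputs a $(1+\varepsilon)$-approximation to the number of distinct elements in the stream with probability at least $0.98$.
   Context: Streaming model: a stream of insertions of items from the universe $[n]$, of length polynomially bounded in $n$, defines a frequency vector $f\in\mathbb{Z}_{\ge 0}^n$ ($f_i$ is the number of occurrences of $i$). The number of distinct elements is $F_0=|\{i:f_i\neq 0\}|$. The algorithm makes a single pass over the stream; a $(1+\varepsilon)$-approximation to $F_0$ is a value $\hat F$ with $(1-\varepsilon)F_0\le\hat F\le(1+\varepsilon)F_0$. *)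

(* Defs.v *)
From HB Require Import structures.
From mathcomp Require Import all_boot all_order all_algebra.
Set Implicit Arguments. Unset Strict Implicit. Unset Printing Implicit Defensive.
Import Order.TTheory GRing.Theory Num.Theory.
Local Open Scope ring_scope.

Definition freq (n : nat) (sigma : seq 'I_n) (i : 'I_n) : nat := count_mem i sigma.

Definition F0 (n : nat) (sigma : seq 'I_n) : nat :=
  #|[set i : 'I_n | freq sigma i != 0%N]|.

Definition num_heavy (n : nat) (sigma : seq 'I_n) : nat :=
  #|[set i : 'I_n | (1 < freq sigma i)%N]|.

(* A one-pass randomized streaming algorithm over the universe [n] whose memory
   consists of s bits: its memory states are the 2^s bit strings, encoded as
   'I_(2^s).  It starts in a random state (distribution [init]), on each stream
   item it moves to a random new state (distribution [trans q i], so fresh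
   random coins are allowed, but any randomness that is to be remembered must
   be stored in the s bits), and at the end it outputs [out q]. *)
Record stream_alg (R : realFieldType) (n s : nat) := StreamAlg {
  init  : {ffun 'I_(2 ^ s) -> R};
  trans : 'I_(2 ^ s) -> 'I_n -> {ffun 'I_(2 ^ s) -> R};
  out   : 'I_(2 ^ s) -> R
}.

Definition is_distr (R : realFieldType) (T : finType) (d : {ffun T -> R}) : Prop :=
  (forall x, 0 <= d x) /\ \sum_(x : T) d x = 1.

Definition valid_alg (R : realFieldType) (n s : nat) (A : stream_alg R n s) : Prop :=
  is_distr (init A) /\ forall q i, is_distr (trans A q i).

Definition run (R : realFieldType) (n s : nat) (A : stream_alg R n s)
    (sigma : seq 'I_n) : {ffun 'I_(2 ^ s) -> R} :=
  foldl (fun (d : {ffun 'I_(2 ^ s) -> R}) i => [ffun q' => \sum_(q : 'I_(2 ^ s)) d q * trans A q i q'])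
        (init A) sigma.

Definition success_prob (R : realFieldType) (n s : nat) (A : stream_alg R n s)
    (eps : R) (sigma : seq 'I_n) : R :=
  \sum_(q : 'I_(2 ^ s) | ((1 - eps) * (F0 sigma)%:R <= out A q)
                          && (out A q <= (1 + eps) * (F0 sigma)%:R))
     run A sigma q.

(* Main.v *)
Require Import Defs.
From HB Require Import structures.
From mathcomp Require Import all_boot all_order all_algebra.
From mathcomp Require Import zify ring lra.
Set Implicit Arguments. Unset Strict Implicit. Unset Printing Implicit Defensive.
Import Order.TTheory GRing.Theory Num.Theory.

Section MG.
Variables (n k : nat).

Definition st := (nat * nat * {ffun 'I_n -> nat})%type.
Definition supp (g : {ffun 'I_n -> nat}) := [set x | (0 < g x)%N].

Definition step (t : st) (y : 'I_n) : st :=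
  let: (m, D, g) := t in
  if (0 < g y)%N || (#|supp g| < k)%N then (m.+1, D, [ffun x => g x + (x == y)])
  else (m.+1, D.+1, [ffun x => (g x).-1]).

Definition s0 : st := (0, 0, [ffun _ => 0]).
Definition astate (s : seq 'I_n) := foldl step s0 s.

Lemma freq_rcons (s : seq 'I_n) y x : freq (rcons s y) x = freq s x + (y == x).
Proof. by rewrite /freq -cats1 count_cat /= addn0. Qed.

Lemma sum_freq (s : seq 'I_n) : (\sum_x freq s x)%N = size s.
Proof.
elim: s => [|y s IH]; first by rewrite big1.
rewrite /freq /=. rewrite big_split /= -/(freq s) IH.
rewrite (bigD1 y) //= eqxx big1 ?addn0 //.
by move=> x /negbTE; rewrite eq_sym => ->.
Qed.

Lemma sum_pred_supp (g : {ffun 'I_n -> nat}) :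
  (\sum_x (g x).-1 + #|supp g|)%N = (\sum_x g x)%N.
Proof.
rewrite -sum1_card [X in (_ + X)%N]big_mkcond /= -big_split /=.
apply: eq_bigr => x _; rewrite inE; by case: (g x) => //= m; rewrite addn1.
Qed.

Lemma inv_astate (s : seq 'I_n) :
  let: (m, D, g) := astate s in
  [/\ m = size s, (#|supp g| <= k)%N, forall x, (g x <= freq s x)%N,
      forall x, (freq s x <= g x + D)%N & (\sum_x g x + k.+1 * D)%N = m].
Proof.
elim/last_ind: s => [|s y].
  rewrite /astate /=; split.
  - by [].
  - by apply/leq_trans: (leq0n k); rewrite leqn0 cards_eq0; apply/eqP/setP => x; rewrite !inE ffunE.
  - by move=> x; rewrite ffunE.
  - by move=> x; rewrite ffunE /freq.
  - by rewrite big1 ?muln0 // => x _; rewrite ffunE.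
rewrite /astate foldl_rcons -/(astate s).
case: (astate s) => [[m D] g] [Hm Hs Hle Hge Hsum] /=.
rewrite size_rcons.
case: ifP => [/orP Hc|/negbT].
- split.
  + by rewrite Hm.
  + case: (posnP (g y)) => [Hy0|Hy].
    * have Hk : (#|supp g| < k)%N by case: Hc => //; rewrite Hy0.
      apply: leq_trans Hk.
      apply: (@leq_trans #|y |: supp g|); last by rewrite cardsU1; case: (y \in supp g).
      apply: subset_leq_card; apply/subsetP => x; rewrite !inE ffunE.
      by case: eqP => // _; rewrite addn0 => ->; rewrite orbT.
    * apply: leq_trans Hs; apply: subset_leq_card; apply/subsetP => x; rewrite !inE ffunE.
      by case: eqP => [->|_]; rewrite ?addn0.
  + move=> x; rewrite ffunE freq_rcons eq_sym; exact: leq_add.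
  + move=> x; rewrite ffunE freq_rcons eq_sym; have := Hge x; case: (x == y); lia.
  + under eq_bigr => x _ do rewrite ffunE; have H1 : (\sum_(i < n) (i == y) = 1)%N by rewrite (bigD1 y) //= eqxx big1 // => x /negbTE ->.
    rewrite big_split /= H1 -Hsum addn1 addSn; done.
- rewrite negb_or => /andP [Hy Hks]; move: Hy Hks; rewrite -!leqNgt => Hy Hks.
  have Hy0 : g y = 0 by lia.
  have Hk : #|supp g| = k by apply/eqP; rewrite eqn_leq Hs Hks.
  split.
  + by rewrite Hm.
  + apply: leq_trans Hs; apply: subset_leq_card; apply/subsetP => x; rewrite !inE ffunE.
    by case: (g x).
  + move=> x; rewrite ffunE freq_rcons; have := Hle x; lia.
  + move=> x; rewrite ffunE freq_rcons; have := Hge x.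
    case: (eqVneq y x) => [<-|_]; rewrite ?Hy0 /=; lia.
  + have := sum_pred_supp g; rewrite Hk.
    have -> : (\sum_x [ffun x => (g x).-1] x = \sum_x (g x).-1)%N by apply: eq_bigr => x _; rewrite ffunE.
    lia.
Qed.

Lemma F0_sum (s : seq 'I_n) : F0 s = (\sum_x (freq s x != 0))%N.
Proof. by rewrite /F0 -sum1_card big_mkcond /=; apply: eq_bigr => x _; rewrite inE. Qed.

Lemma heavy_sum (s : seq 'I_n) : num_heavy s = (\sum_x (1 < freq s x))%N.
Proof. by rewrite /num_heavy -sum1_card big_mkcond /=; apply: eq_bigr => x _; rewrite inE. Qed.

Lemma mg_bound C N (s : seq 'I_n) : k = (C + N)%N -> (num_heavy s <= C)%N ->
  let: (m, D, g) := astate s in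
  [/\ (\sum_x (g x).-1 <= m)%N, (F0 s <= m - \sum_x (g x).-1)%N,
      (m - \sum_x (g x).-1 <= F0 s + C * D)%N & (N.+1 * D <= F0 s)%N].
Proof.
move=> Hk HH.
have := inv_astate s; case: (astate s) => [[m D] g] [Hm Hs Hle Hge Hsum].
have h1 : (F0 s + \sum_x (freq s x).-1 = m)%N.
  rewrite F0_sum -big_split Hm -sum_freq /=; apply: eq_bigr => x _; by case: (freq s x).
have h2 : (\sum_x (g x).-1 <= \sum_x (freq s x).-1)%N.
  by apply: leq_sum => x _; have := Hle x; lia.
have h3 : (\sum_x (freq s x).-1 <= \sum_x (g x).-1 + num_heavy s * D)%N.
  rewrite heavy_sum big_distrl /= -big_split /=; apply: leq_sum => x _.
  have := Hge x; case: (freq s x) => [|[|f]] /=; lia.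
have h4 : (m <= \sum_x g x + num_heavy s * D + \sum_x (freq s x == 1))%N.
  rewrite Hm -sum_freq heavy_sum big_distrl /= -!big_split /=; apply: leq_sum => x _.
  have := Hge x; case: (freq s x) => [|[|f]] /=; lia.
have h5 : (\sum_x (freq s x == 1) <= F0 s)%N.
  by rewrite F0_sum; apply: leq_sum => x _; case: (freq s x) => [|[|f]].
have h6 : (num_heavy s * D <= C * D)%N by rewrite leq_mul2r HH orbT.
have h7 : (\sum_x (g x).-1 <= \sum_x g x)%N by apply: leq_sum => x _; lia.
subst k; split; nia.
Qed.
End MG.

Section Pack.
Variables (n k M' : nat) (x0 : 'I_n).
Notation M := M'.+1.

Definition PT := ('I_M * 'I_M * {ffun 'I_k -> 'I_n * 'I_M})%type.

Definition pack (t : st n) : PT :=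
  let: (m, D, g) := t in
  let l := enum (supp g) in
  (inord m, inord D, [ffun j : 'I_k => if (j < size l)%N then (nth x0 l j, inord (g (nth x0 l j))) else (x0, ord0)]).

Definition unpack (t : PT) : st n :=
  let: (a, b, h) := t in
  (val a, val b, [ffun x => (\sum_(j < k) if (h j).1 == x then val (h j).2 else 0)%N]).

Definition good (t : st n) := let: (m, D, g) := t in
  [/\ (m < M)%N, (D < M)%N, forall x, (g x < M)%N & (#|supp g| <= k)%N].

Lemma packK t : good t -> unpack (pack t) = t.
Proof.
case: t => [[m D] g] [Hm HD Hg Hs] /=.
rewrite !inordK //; congr (_, _, _); apply/ffunP => x; rewrite ffunE.
set l := enum (supp g).
have Hsz : (size l <= k)%N by rewrite /l -cardE.
transitivity (\sum_(j < k | (j < size l)%N) (nth x0 l j == x) * g x)%N.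
  rewrite [RHS]big_mkcond /=; apply: eq_bigr => j _; rewrite ffunE.
  case: (j < size l) => /=; last by case: (x0 == x).
  by case: eqP => [->|]; rewrite ?inordK ?mul1n ?mul0n.
rewrite -big_distrl /= -(big_ord_widen k (fun j => (nth x0 l j == x) : nat)) //.
rewrite -(big_mkord xpredT (fun j => (nth x0 l j == x) : nat)).
rewrite -(big_nth x0 xpredT (fun y => (y == x) : nat)).
have -> : (\sum_(i <- l) (i == x) = count_mem x l)%N by elim: (l) => [|a r IH]; rewrite ?big_nil ?big_cons //= IH eq_sym.
rewrite count_uniq_mem ?enum_uniq // /l mem_enum inE.
by case: (posnP (g x)) => [->|H]; rewrite ?muln0 ?H ?mul1n.
Qed.

Lemma card_PT : (#|{: PT}| = M * M * (n * M) ^ k)%N.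
Proof. by rewrite !card_prod card_ffun !card_prod !card_ord. Qed.
End Pack.

Lemma goodA n k M' (sg : seq 'I_n) : (size sg <= M')%N -> good k M' (astate k sg).
Proof.
move=> Hs'; have := inv_astate k sg.
case: (astate k sg) => [[m D] g] [Hm Hs Hle Hge Hsum]; split => //.
- rewrite Hm; lia.
- nia.
- move=> x; apply: leq_ltn_trans (Hle x) _; apply: leq_ltn_trans (count_size _ _) _; by rewrite ltnS.
Qed.

Lemma foldl_enc n k M' x0 (Q : Type) (enc : PT n k M' -> Q) (dec : Q -> PT n k M')
  (decK : forall t, dec (enc t) = t) (sg : seq 'I_n) : (size sg <= M')%N ->
  foldl (fun q i => enc (pack k M' x0 (step k (unpack (dec q)) i))) (enc (pack k M' x0 (s0 n))) sg
  = enc (pack k M' x0 (astate k sg)).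
Proof.
elim/last_ind: sg => [|sg y IH] Hs' //.
rewrite size_rcons in Hs'.
have Hs : (size sg <= M')%N by lia.
by rewrite /astate !foldl_rcons IH // decK packK //; apply: goodA.
Qed.


Local Open Scope ring_scope.

Section Det.
Variables (R : realFieldType) (n s : nat).
Definition delta (q : 'I_(2 ^ s)) : {ffun 'I_(2 ^ s) -> R} := [ffun q' => (q' == q)%:R].
Definition det_alg (q0 : 'I_(2 ^ s)) (F : 'I_(2 ^ s) -> 'I_n -> 'I_(2 ^ s)) (o : 'I_(2 ^ s) -> R) :
  stream_alg R n s := @StreamAlg R n s (delta q0) (fun q i => delta (F q i)) o.

Lemma delta_distr q : is_distr (delta q).
Proof.
split; first by move=> x; rewrite ffunE ler0n.
rewrite (bigD1 q) //= ffunE eqxx big1 ?addr0 // => x /negbTE Hx.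
by rewrite ffunE Hx.
Qed.

Variables (q0 : 'I_(2 ^ s)) (F : 'I_(2 ^ s) -> 'I_n -> 'I_(2 ^ s)) (o : 'I_(2 ^ s) -> R).

Lemma det_valid : valid_alg (det_alg q0 F o).
Proof. by split => [|q i]; apply: delta_distr. Qed.

Lemma det_run sigma : run (det_alg q0 F o) sigma = delta (foldl F q0 sigma).
Proof.
rewrite /run /=; elim: sigma q0 => [|i sg IH] q //=.
rewrite -IH; congr foldl; apply/ffunP => q'; rewrite !ffunE /=.
rewrite (bigD1 q) //= !ffunE eqxx mul1r big1 ?addr0 // => x /negbTE Hx.
by rewrite ffunE Hx mul0r.
Qed.

Lemma det_success eps sigma :
  let qf := foldl F q0 sigma in
  ((1 - eps) * (F0 sigma)%:R <= o qf) && (o qf <= (1 + eps) * (F0 sigma)%:R) ->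
  success_prob (det_alg q0 F o) eps sigma = 1.
Proof.
move=> qf H; rewrite /success_prob det_run -/qf big_mkcond /=.
rewrite (bigD1 qf) //= H ffunE eqxx big1 ?addr0 // => x /negbTE Hx.
by rewrite ffunE Hx; case: ifP.
Qed.
End Det.

Lemma acc_real (R : realFieldType) (eps ie : R) (C N m D S F : nat) :
  eps * ie = 1 -> 0 < eps -> eps < 1 -> C%:R * ie <= N%:R -> (S <= m)%N ->
  (F <= m - S)%N -> (m - S <= F + C * D)%N -> (N.+1 * D <= F)%N ->
  ((1 - eps) * F%:R <= m%:R - S%:R) && (m%:R - S%:R <= (1 + eps) * F%:R).
Proof.
move=> Hie He0 He1 HN HS Hlo Hhi HND.
rewrite -natrB //.
move: Hlo Hhi HND; rewrite -!(ler_nat R) !natrD !natrM => Hlo Hhi HND.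
set X := (m - S)%:R in Hlo Hhi *.
have D0 : 0 <= D%:R :> R by rewrite ler0n.
have F0 : 0 <= F%:R :> R by rewrite ler0n.
have HC : C%:R <= eps * N%:R.
  have := ler_wpM2l (ltW He0) HN; rewrite mulrCA Hie mulr1 => //.
have HCD : C%:R * D%:R <= eps * F%:R.
  have := ler_wpM2r D0 HC => H1.
  have : eps * N%:R * D%:R <= eps * (N.+1)%:R * D%:R.
    by apply: ler_wpM2r => //; apply: ler_wpM2l; [exact: ltW | rewrite ler_nat].
  have := ler_wpM2l (ltW He0) HND => H2 H3.
  lra.
apply/andP; split; nra.
Qed.

Lemma space_real (R : realFieldType) (eps : R) (C N n p : nat) :
  0 < eps -> (2 <= n)%N -> 4 <= C%:R * eps^-1 -> 1 <= eps^-1 ->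
  N%:R <= C%:R * eps^-1 + 1 ->
  (up_log 2 (n * (n ^ p).+1) * (C + N + 2))%:R <= (3 * (p + 2))%:R * C%:R / eps * (up_log 2 n)%:R.
Proof.
move=> He0 Hn H4 H1 HN.
set u := up_log 2 n.
have HL : (up_log 2 (n * (n ^ p).+1) <= (p + 2) * u)%N.
  apply: up_log_min => //.
  apply: (@leq_trans (n ^ (p + 2))).
    have Pp : (1 <= n ^ p)%N by rewrite expn_gt0; lia.
    rewrite expnD expnS expn1; nia.
  by rewrite mulnC expnM leq_exp2r ?addn2 //; apply: up_logP.
rewrite natrM.
have Hk : (C + N + 2)%:R <= 3 * (C%:R * eps^-1) :> R.
  rewrite !natrD.
  have : C%:R <= C%:R * eps^-1 :> R by rewrite ler_peMr ?ler0n.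
  lra.
have HL' : (up_log 2 (n * (n ^ p).+1))%:R <= ((p + 2) * u)%:R :> R by rewrite ler_nat.
apply: le_trans (ler_pM (ler0n _ _) (ler0n _ _) HL' Hk) _.
rewrite natrM !natrM le_eqVlt; apply/orP; left; apply/eqP; ring.
Qed.

Unset Implicit Arguments.

Theorem theorem5p6 (R : realFieldType) (p : nat) :
  exists K0 K1 : R, 0 < K0 /\ 0 < K1 /\
  forall (eps : R) (C n : nat),
    0 < eps < 1 -> (1 <= C)%N -> C%:R <= 1 / (4 * eps) -> (2 <= n)%N ->
    exists (s : nat) (A : stream_alg R n s),
      valid_alg A /\
      s%:R <= K1 * C%:R / eps * (up_log 2 n)%:R /\
      forall sigma : seq 'I_n,
        (size sigma <= n ^ p)%N ->
        (num_heavy sigma <= C)%N ->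
        K0 / eps ^+ 2 <= (F0 sigma)%:R ->
        49 / 50 <= success_prob A eps sigma.
Proof.
exists 1, (3 * (p + 2))%:R; split; first exact: ltr01.
split; first by rewrite ltr0n; lia.
move=> eps C n /andP [He0 He1] HC1 HCe Hn.
set ie := eps^-1.
have Hie : eps * ie = 1 by rewrite mulfV // gt_eqF.
have ie0 : 0 < ie by rewrite invr_gt0.
have H4 : 1 / (4 * eps) = ie / 4 by rewrite /ie; field; rewrite ?gt_eqF //; lra.
rewrite H4 in HCe.
have Cge1 : 1 <= C%:R :> R by rewrite ler1n.
have ie1 : 1 <= ie by nra.
have Cie4 : 4 <= C%:R * ie by nra.
have HF0n : forall sg : seq 'I_n, (F0 sg <= n)%N.
  by move=> sg; rewrite /F0; apply: leq_trans (max_card _) _; rewrite card_ord.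
have u1 : (1 <= up_log 2 n)%N by rewrite up_log_gt0.
have RHS0 : 0 <= (3 * (p + 2))%:R * C%:R / eps * (up_log 2 n)%:R.
  by rewrite -/ie; apply: mulr_ge0; [apply: mulr_ge0; [apply: mulr_ge0|]|]; rewrite ?ler0n // ltW.
case: (boolP (ie <= n%:R)) => Hsmall; last first.
  exists 0%N, (det_alg (Ordinal (isT : (0 < 2 ^ 0)%N)) (fun q _ => q) (fun _ => 0)).
  split; first exact: det_valid.
  split; first by [].
  move=> sg _ _ HF; exfalso.
  move: Hsmall; rewrite -ltNge => Hsmall.
  have : (F0 sg)%:R <= n%:R :> R by rewrite ler_nat.
  move: HF; rewrite div1r -exprVn -/ie => HF.
  nra.
have Pex : exists N : nat, C%:R * ie <= N%:R.
  by exists (C * n)%N; rewrite natrM ler_wpM2l // ler0n.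
case: (ex_minnP Pex) => N HN Hmin.
have N1 : (1 <= N)%N.
  case: N HN Hmin => // HN; have : 0 < C%:R * ie by nra.
  by rewrite lt_leAnge HN andbF.
have HNup : N%:R <= C%:R * ie + 1.
  case: N HN Hmin N1 => // N' HN Hmin _.
  have : ~~ (C%:R * ie <= N'%:R).
    by apply/negP => /Hmin; rewrite ltnn.
  by rewrite -ltNge -natr1 => H; lra.
pose k := (C + N)%N. pose M' := (n ^ p)%N.
have n0 : (0 < n)%N by lia.
pose x0 : 'I_n := Ordinal n0.
pose L := up_log 2 (n * M'.+1). pose s := (L * (k + 2))%N.
have HcardT : (#|{: PT n k M'}| <= 2 ^ s)%N.
  rewrite card_PT.
  have HnM : (n * M'.+1 <= 2 ^ L)%N by apply: up_logP.
  have HM : (M'.+1 <= n * M'.+1)%N by rewrite leq_pmull.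
  apply: (@leq_trans ((n * M'.+1) ^ (k + 2))).
    by rewrite expnD [X in (_ <= X)%N]mulnC; apply: leq_mul => //; rewrite expnS expn1; apply: leq_mul.
  by rewrite /s expnM leq_exp2r // addn2.

pose t0 : PT n k M' := pack k M' x0 (s0 n).
pose enc (t : PT n k M') : 'I_(2 ^ s) := widen_ord HcardT (enum_rank t).
pose dec (q : 'I_(2 ^ s)) : PT n k M' := nth t0 (enum {: PT n k M'}) q.
have decK : forall t, dec (enc t) = t.
  move=> t; rewrite /dec /enc /=.
  exact: (nth_enum_rank t0 t).
pose F := fun (q : 'I_(2 ^ s)) (i : 'I_n) => enc (pack k M' x0 (step k (unpack (dec q)) i)).
pose o := fun (q : 'I_(2 ^ s)) => let: (m, D, g) := unpack (dec q) in
   (m%:R - (\sum_x (g x).-1)%:R : R).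
exists s, (det_alg (enc t0) F o).
split; first exact: det_valid.
split.
  rewrite /s /L /M' /k; apply: space_real => //.
move=> sg Hsz HH HF.
rewrite det_success; first by rewrite ler_pdivrMr // mul1r ler_nat.
rewrite /F /t0 foldl_enc // /o decK (packK x0 (goodA k Hsz)).
have := mg_bound (erefl k) HH.
case: (astate k sg) => [[m D] g] [Hle1 Hlo Hhi HND].
exact: (acc_real Hie He0 He1 HN Hle1 Hlo Hhi HND).
Qed.
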